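(* Let $R$ be a commutative ring of characteristic $2$ and $M=\begin{pmatrix} a&b\\ c&d\end{pmatrix}$ with $a,b,c,d\in R$. Put $t=a+d$. Then for all integers $s\ge0$, \[M^{2^s}=\begin{pmatrix} a^{2^s}+\sum_{i=0}^{s-1}b^{2^i}c^{2^i}t^{2^s-2^{i+1}} & bt^{2^s-1}\\ ct^{2^s-1} & d^{2^s}+\sum_{i=0}^{s-1}b^{2^i}c^{2^i}t^{2^s-2^{i+1}}\end{pmatrix}.\]
   Context: A unital ring has characteristic $2$ if $1+1=0$ in it. *)

(* Defs.v *)
From mathcomp Require Import all_boot all_order all_algebra.
Set Implicit Arguments. Unset Strict Implicit. Unset Printing Implicit Defensive.
Import GRing.Theory.
Local Open Scope ring_scope.

Definition mx2 (R : comPzRingType) (a b c d : R) : 'M[R]_2 :=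
  \matrix_(i < 2, j < 2)
    if (i == 0 :> nat) then (if (j == 0 :> nat) then a else b)
    else (if (j == 0 :> nat) then c else d).

(* Main.v *)
Require Import Defs.
From mathcomp Require Import all_boot all_order all_algebra.
From mathcomp Require Import ring zify.
Import GRing.Theory.
Local Open Scope ring_scope.

Lemma mx2_sqr (R : comPzRingType) (a b c d : R) :
  mx2 a b c d ^+ 2 = mx2 (a*a+b*c) (b*(a+d)) (c*(a+d)) (d*d+b*c).
Proof.
rewrite expr2; apply/matrixP => i j; rewrite !mxE !big_ord_recl big_ord0 !mxE /=.
case: i => [[|[|i]] Hi] //; case: j => [[|[|j]] Hj] //=; rewrite addr0; ring.
Qed.

Section C2.
Variables (R : comPzRingType) (char2 : 1 + 1 = 0 :> R).
Lemma dbl0 (x : R) : x + x = 0.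
Proof. by rewrite -[x]mulr1 -mulrDr char2 mulr0. Qed.
Lemma sqrD2 (x y : R) : (x + y) ^+ 2 = x ^+ 2 + y ^+ 2.
Proof.
have -> : (x + y) ^+ 2 = x ^+ 2 + y ^+ 2 + (x * y + x * y) by ring.
by rewrite dbl0 addr0.
Qed.
Lemma frobD (x y : R) n : (x + y) ^+ (2 ^ n) = x ^+ (2 ^ n) + y ^+ (2 ^ n).
Proof.
elim: n => // n IH; by rewrite expnSr !exprM IH sqrD2.
Qed.
Lemma sqr_sum (s : nat) (F : 'I_s -> R) : (\sum_(i < s) F i) ^+ 2 = \sum_(i < s) F i ^+ 2.
Proof.
apply: (big_morph (fun x : R => x ^+ 2)); first exact: sqrD2.
by rewrite expr0n.
Qed.
End C2.

Theorem lemma4p2 (R : comPzRingType) (char2 : 1 + 1 = 0 :> R) (a b c d : R) (s : nat) :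
  let t := a + d in
  let S := \sum_(i < s) b ^+ (2 ^ i) * c ^+ (2 ^ i) * t ^+ (2 ^ s - 2 ^ i.+1) in
  (mx2 a b c d) ^+ (2 ^ s) =
  mx2 (a ^+ (2 ^ s) + S) (b * t ^+ (2 ^ s - 1))
      (c * t ^+ (2 ^ s - 1)) (d ^+ (2 ^ s) + S).
Proof.
move=> t S; rewrite {}/S.
elim: s => [|s IH].
  rewrite expn0 expr1 big_ord0 !addr0 subnn !expr0 !mulr1 //.
rewrite expnSr exprM IH mx2_sqr.
set S := \sum_(i < s) _.
have Ht : a ^+ (2 ^ s) + S + (d ^+ (2 ^ s) + S) = t ^+ (2 ^ s).
  by rewrite /t frobD // addrACA dbl0 // addr0.
have Hp : (2 ^ s * 2 - 1 = (2 ^ s - 1) + 2 ^ s)%N.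
  have := expn_gt0 2 s; lia.
have HS : (a ^+ (2 ^ s) + S) * (a ^+ (2 ^ s) + S) =  a ^+ (2 ^ s * 2) + S ^+ 2.
  by rewrite -expr2 sqrD2 // exprM.
have HS2 : S ^+ 2 = \sum_(i < s) b ^+ (2 ^ i.+1) * c ^+ (2 ^ i.+1) * t ^+ (2 ^ s * 2 - 2 ^ i.+2).
  rewrite /S sqr_sum //; apply: eq_bigr => i _.
  rewrite !exprMn -!exprM -!expnSr; congr (_ * _).
  by rewrite mulnBl -!expnSr.
have HS' : (d ^+ (2 ^ s) + S) * (d ^+ (2 ^ s) + S) =  d ^+ (2 ^ s * 2) + S ^+ 2.
  by rewrite -expr2 sqrD2 // exprM.
have Ht2 : t ^+ (2 ^ s * 2 - 1) = t ^+ (2 ^ s - 1) * t ^+ (2 ^ s) by rewrite Hp exprD.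
have Ht3 : t ^+ (2 ^ s * 2 - 2) = t ^+ (2 ^ s - 1) * t ^+ (2 ^ s - 1).
  rewrite -exprD; congr (_ ^+ _); have := expn_gt0 2 s; lia.
rewrite Ht HS HS' HS2 big_ord_recl /= expn0 !expr1 Ht2 Ht3 !mulrA.
idtac.
congr (mx2 _ _ _ _).
all: ring.
Qed.
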